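(* Let $H$ be a combinatorial Hopf monoid, $K\subseteq H$ a Hopf submonoid, $I$ a finite set and $h\in H_I$. Let $\Delta_h$ be the set of set compositions $C$ of $I$ all of whose minors $h_j$ are defined, and let $\Gamma_{K,h}\subseteq\Delta_h$ be the set of those $C\in\Delta_h$ such that some minor $h_j\notin K_{C_j}$. Then: (1) if $C\in\Gamma_{K,h}$ and $D\in\Delta_h$ is a coarsening of $C$ (each block of $D$ is a union of consecutive blocks of $C$, in order), then $D\in\Gamma_{K,h}$; (2) $\Psi_{\varphi_K}(h)=\sum_{C\in\Delta_h\setminus\Gamma_{K,h}}M_{\mathrm{type}(C)}$, i.e. $\Psi_{\varphi_K}(h)$ is the Ehrhart quasisymmetric function $E_{C(\Delta_h\setminus\Gamma_{K,h})}$ enumerating (via $\mathbf a\mapsto\prod_{i\in I}x_{a_i}$) the lattice points $\mathbf a\in\mathbb Z_{>0}^I$ which are constant on the blocks of some $C\in\Delta_h\setminus\Gamma_{K,h}$ and strictly increasing from block to block.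
   Context: A combinatorial Hopf monoid $H$ consists of: for each finite set $I$ a finite set $H_I$, with $H_\emptyset=\{1\}$, and bijections $H_\sigma:H_I\to H_J$ for bijections $\sigma:I\to J$, functorially; associative products $H_S\times H_T\to H_{S\sqcup T}$, $(f,g)\mapsto f\cdot g$, with unit $1$; and for each $S\subseteq I$ partial maps (restriction) $h\mapsto h|_S\in H_S$ and (contraction) $h\mapsto h/S\in H_{I\setminus S}$, with $h|_I=h$, $h/\emptyset=h$, all maps compatible with relabelings, such that for $T\subseteq S\subseteq I$: $(h|_S)|_T=h|_T$, $(h/T)/(S\setminus T)=h/S$, $(h|_S)/T=(h/T)|_{S\setminus T}$, and for $f\in H_A$, $g\in H_B$, $S\subseteq A\sqcup B$: $(f\cdot g)|_S=f|_{S\cap A}\cdot g|_{S\cap B}$ and $(f\cdot g)/S=f/(S\cap A)\cdot g/(S\cap B)$; in each equation one side is defined iff the other is. A Hopf submonoid $K$ is a family $K_I\subseteq H_I$ closed under relabeling, containing $1$, closed under products, and such that restrictions and contractions of elements of $K$, when defined, lie in $K$. The character $\varphi_K$ is $\varphi_K(h)=1$ if $h\in K_I$ and $0$ otherwise (and $0$ on undefined elements). For a set composition $C=(C_1,\dots,C_k)$ of $I$ (nonempty disjoint blocks with union $I$), set $S_j=C_1\cup\dots\cup C_j$, $S_0=\emptyset$, and the minors $h_j=(h|_{S_j})/S_{j-1}\in H_{C_j}$; $\mathrm{type}(C)=(|C_1|,\dots,|C_k|)$; $M_\alpha$ is the monomial quasisymmetric function. $\Psi_\varphi(h)=\sum_{C}\big(\prod_{j}\varphi(h_j)\big)M_{\mathrm{type}(C)}$,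 the sum over all set compositions of $I$. *)

(* Defs.v *)
From HB Require Import structures.
From mathcomp Require Import all_boot all_order all_algebra.
Set Implicit Arguments. Unset Strict Implicit. Unset Printing Implicit Defensive.
Import GRing.Theory.

(* Finite sets of labels.  Every finite set is in bijection with a finite    *)
(* subset of nat, so (as usual for species) we index by finite subsets of    *)
(* nat, represented canonically by strictly increasing sequences.            *)
Definition fnset := {s : seq nat | sorted ltn s}.

Lemma fset_of_proof (s : seq nat) : sorted ltn (sort leq (undup s)).
Proof.
by rewrite ltn_sorted_uniq_leq sort_uniq undup_uniq (sort_sorted leq_total).
Qed.

Definition fset_of (s : seq nat) : fnset := exist (fun t => sorted ltn t) _ (fset_of_proof s).
Definition fs (A : fnset) : seq nat := sval A.

Definition fempty : fnset := fset_of [::].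
Definition fU (A B : fnset) : fnset := fset_of (fs A ++ fs B).
Definition fI (A B : fnset) : fnset := fset_of [seq x <- fs A | x \in fs B].
Definition fD (A B : fnset) : fnset := fset_of [seq x <- fs A | x \notin fs B].
Definition fsub (A B : fnset) : bool := all (fun x => x \in fs B) (fs A).
Definition fdisj (A B : fnset) : bool := all (fun x => x \notin fs B) (fs A).
Definition fimg (s : nat -> nat) (A : fnset) : fnset := fset_of (map s (fs A)).
Definition bigU (Cs : seq fnset) : fnset := foldr fU fempty Cs.

Definition fbij (I J : fnset) (s : nat -> nat) : Prop :=
  {in fs I &, injective s} /\ fimg s I = J.

Definition idn : nat -> nat := fun x => x.

Definition omap2 (A B C : Type) (F : A -> B -> C) (oa : option A) (ob : option B)
  : option C :=
  match oa, ob with Some a, Some b => Some (F a b) | _, _ => None end.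

(*  hrel I J s   : the relabeling H_s : H_I -> H_J (s a bijection I -> J)   *)
(*  hmul A B     : product H_A x H_B -> H_{A u B} (A, B disjoint)           *)
(*  hres I S h   : h|_S  (partial, None = undefined)     for S subset I     *)
(*  hcon I S h   : h/S   (partial, None = undefined)     for S subset I     *)
(* Canonical identifications between equal index sets are performed by     *)
(* relabeling along the identity (hrel _ _ idn).                             *)
Unset Implicit Arguments.
Record HopfMonoid := {
  hcar : fnset -> finType;
  hrel : forall I J : fnset, (nat -> nat) -> hcar I -> hcar J;
  hone : hcar fempty;
  hmul : forall A B : fnset, hcar A -> hcar B -> hcar (fU A B);
  hres : forall I S : fnset, hcar I -> option (hcar S);
  hcon : forall I S : fnset, hcar I -> option (hcar (fD I S));
  hrel_ext : forall I J s t (x : hcar I), fbij I J s -> {in fs I, s =1 t} ->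
    hrel I J s x = hrel I J t x;
  hrel_id : forall I (x : hcar I), hrel I I idn x = x;
  hrel_comp : forall I J L s t (x : hcar I), fbij I J s -> fbij J L t ->
    hrel I L (t \o s) x = hrel J L t (hrel I J s x);
  hempty : forall x : hcar fempty, x = hone;
  hmul_assoc : forall A B C (f : hcar A) (g : hcar B) (k : hcar C),
    fdisj A B -> fdisj A C -> fdisj B C ->
    hmul (fU A B) C (hmul A B f g) k
    = hrel (fU A (fU B C)) (fU (fU A B) C) idn (hmul A (fU B C) f (hmul B C g k));
  hmul1l : forall A (f : hcar A), hmul fempty A hone f = hrel A (fU fempty A) idn f;
  hmul1r : forall A (f : hcar A), hmul A fempty f hone = hrel A (fU A fempty) idn f;
  hmul_rel : forall A B A' B' s (f : hcar A) (g : hcar B),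
    fdisj A B -> fbij (fU A B) (fU A' B') s -> fbij A A' s -> fbij B B' s ->
    hrel (fU A B) (fU A' B') s (hmul A B f g)
    = hmul A' B' (hrel A A' s f) (hrel B B' s g);
  hres_full : forall I (h : hcar I), hres I I h = Some h;
  hcon_empty : forall I (h : hcar I),
    hcon I fempty h = Some (hrel I (fD I fempty) idn h);
  hres_res : forall I S T (h : hcar I), fsub T S -> fsub S I ->
    obind (hres S T) (hres I S h) = hres I T h;
  hcon_con : forall I S T (h : hcar I), fsub T S -> fsub S I ->
    obind (hcon (fD I T) (fD S T)) (hcon I T h)
    = omap (hrel (fD I S) (fD (fD I T) (fD S T)) idn) (hcon I S h);
  hres_con : forall I S T (h : hcar I), fsub T S -> fsub S I ->
    obind (hcon S T) (hres I S h) = obind (hres (fD I T) (fD S T)) (hcon I T h);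
  hres_mul : forall A B S (f : hcar A) (g : hcar B), fdisj A B -> fsub S (fU A B) ->
    hres (fU A B) S (hmul A B f g)
    = omap (hrel (fU (fI S A) (fI S B)) S idn)
        (omap2 (hmul (fI S A) (fI S B)) (hres A (fI S A) f) (hres B (fI S B) g));
  hcon_mul : forall A B S (f : hcar A) (g : hcar B), fdisj A B -> fsub S (fU A B) ->
    hcon (fU A B) S (hmul A B f g)
    = omap (hrel (fU (fD A (fI S A)) (fD B (fI S B))) (fD (fU A B) S) idn)
        (omap2 (hmul (fD A (fI S A)) (fD B (fI S B)))
           (hcon A (fI S A) f) (hcon B (fI S B) g));
  hres_rel : forall I J S s (h : hcar I), fbij I J s -> fsub S I ->
    omap (hrel S (fimg s S) s) (hres I S h) = hres J (fimg s S) (hrel I J s h);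
  hcon_rel : forall I J S s (h : hcar I), fbij I J s -> fsub S I ->
    omap (hrel (fD I S) (fD J (fimg s S)) s) (hcon I S h)
    = hcon J (fimg s S) (hrel I J s h)
}.
Set Implicit Arguments.

Arguments hrel {_}.
Arguments hone {_}.
Arguments hmul {_ A B}.
Arguments hres {_}.
Arguments hcon {_ I}.

Definition is_submonoid (H : HopfMonoid) (K : forall I, pred (hcar H I)) : Prop :=
  [/\ (forall I J s (x : hcar H I), fbij I J s -> K I x -> K J (hrel I J s x)),
      K fempty hone,
      (forall A B (f : hcar H A) (g : hcar H B), fdisj A B -> K A f -> K B g ->
          K (fU A B) (hmul f g)),
      (forall I S (h : hcar H I) h', fsub S I -> K I h -> hres I S h = Some h' ->
          K S h') &
      (forall I S (h : hcar H I) h', fsub S I -> K I h -> hcon S h = Some h' ->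
          K (fD I S) h')].

Definition phiK (H : HopfMonoid) (K : forall I, pred (hcar H I)) (I : fnset)
  (o : option (hcar H I)) : int :=
  if o is Some x then Posz (nat_of_bool (K I x)) else 0%R.

Definition is_setcomp (I : fnset) (C : seq fnset) : bool :=
  [&& all (fun B => fs B != [::]) C, pairwise fdisj C & bigU C == I].

Definition pref (C : seq fnset) (j : nat) : fnset := bigU (take j C).

(* the minor h_{j+1} = (h|_{S_{j+1}})/S_j  (0-indexed j) *)
Definition minor (H : HopfMonoid) (I : fnset) (h : hcar H I) (C : seq fnset) (j : nat)
  : option (hcar H (fD (pref C j.+1) (pref C j))) :=
  obind (hcon (pref C j)) (hres I (pref C j.+1) h).

Definition ctype (C : seq fnset) : seq nat := map (fun B => size (fs B)) C.

Fixpoint subseqs (s : seq nat) : seq (seq nat) :=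
  if s is x :: s' then [seq x :: t | t <- subseqs s'] ++ subseqs s' else [:: [::]].
Definition subsets (I : fnset) : seq fnset := map fset_of (subseqs (fs I)).
Fixpoint tuples_of (T : Type) (k : nat) (L : seq T) : seq (seq T) :=
  if k is k'.+1 then [seq x :: t | x <- L, t <- tuples_of k' L] else [:: [::]].
Definition setcomps (I : fnset) : seq (seq fnset) :=
  [seq C <- flatten [seq tuples_of k (subsets I) | k <- iota 0 (size (fs I)).+1]
     | is_setcomp I C].

Definition inDelta (H : HopfMonoid) (I : fnset) (h : hcar H I) (C : seq fnset) : bool :=
  is_setcomp I C && all (fun j => isSome (minor h C j)) (iota 0 (size C)).

Definition notinK (H : HopfMonoid) (K : forall I, pred (hcar H I)) (I : fnset)
  (o : option (hcar H I)) : bool := if o is Some x then ~~ K I x else false.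

Definition inGamma (H : HopfMonoid) (K : forall I, pred (hcar H I)) (I : fnset)
  (h : hcar H I) (C : seq fnset) : bool :=
  inDelta h C && has (fun j => notinK K (minor h C j)) (iota 0 (size C)).

Definition coarsening (D C : seq fnset) : Prop :=
  exists r : seq nat,
    [/\ all (fun k => 0 < k) r, sumn r = size C & D = map bigU (reshape r C)].

(* A power series is given by its coefficient function on monomials; the    *)
(* monomial x_1^{e_1} x_2^{e_2} ... x_m^{e_m} is encoded by e = [:: e_1;..; *)
(* e_m] (trailing zeros irrelevant).                                         *)
Definition powser := seq nat -> int.

(* M_alpha = sum_{i_1 < ... < i_k} x_{i_1}^{alpha_1} ... x_{i_k}^{alpha_k} *)
Definition Mono (alpha : seq nat) : powser :=
  fun e => Posz (nat_of_bool ([seq k <- e | 0 < k] == alpha)).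

Definition Psi (H : HopfMonoid) (phi : forall I, option (hcar H I) -> int)
  (I : fnset) (h : hcar H I) : powser :=
  fun e => (\sum_(C <- setcomps I)
              (\prod_(j < size C) phi _ (minor h C j)) * Mono (ctype C) e)%R.

(* Ehrhart quasisymmetric function of a family S of set compositions of I:  *)
(* enumerates the lattice points a in Z_{>0}^I (weight prod_{i in I} x_{a_i})*)
(* which are constant on the blocks of some C in S and strictly increasing   *)
(* from block to block.  A lattice point of weight x^e has all coordinates   *)
(* <= size e; it is encoded by a : 'I_|I| -> 'I_(size e), the coordinate at  *)
(* the i-th element of I (in increasing order) being (a i).+1.               *)
Definition blockidx (C : seq fnset) (x : nat) : nat := find (fun B => x \in fs B) C.

Definition in_cone (I : fnset) (C : seq fnset) (m : nat)
  (a : {ffun 'I_(size (fs I)) -> 'I_m}) : bool :=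
  [forall i : 'I_(size (fs I)), forall j : 'I_(size (fs I)),
     let bi := blockidx C (nth 0 (fs I) i) in
     let bj := blockidx C (nth 0 (fs I) j) in
     ((bi == bj) ==> (a i == a j)) && ((bi < bj) ==> (a i < a j))].

Definition weight_is (I : fnset) (e : seq nat)
  (a : {ffun 'I_(size (fs I)) -> 'I_(size e)}) : bool :=
  [forall k : 'I_(size e), nth 0 e k == #|[set i | a i == k]|].

Definition Ehrhart (S : pred (seq fnset)) (I : fnset) : powser :=
  fun e => Posz #|[set a : {ffun 'I_(size (fs I)) -> 'I_(size e)} |
               weight_is a && has (fun C => S C && in_cone C a) (setcomps I)]|.

(* Main.v *)
Require Import Defs.
From mathcomp Require Import all_boot all_order all_algebra.
Import GRing.Theory.
Import Defs.
Set Implicit Arguments. Unset Strict Implicit. Unset Printing Implicit Defensive.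

Lemma mem_fset_of s x : (x \in fs (fset_of s)) = (x \in s).
Proof. by rewrite /fs /fset_of /= mem_sort mem_undup. Qed.

Lemma fs_sorted (A : fnset) : sorted ltn (fs A).
Proof. exact: (svalP A). Qed.

Lemma fs_uniq (A : fnset) : uniq (fs A).
Proof. exact: (sorted_uniq ltn_trans ltnn (fs_sorted A)). Qed.

Lemma fnset_ext (A B : fnset) : (forall x, (x \in fs A) = (x \in fs B)) -> A = B.
Proof.
move=> e; apply: val_inj; apply: (irr_sorted_eq ltn_trans ltnn (fs_sorted A) (fs_sorted B)).
exact: e.
Qed.

Lemma fs_fset_of s : sorted ltn s -> fs (fset_of s) = s.
Proof.
move=> ss; rewrite /fs /fset_of /= undup_id ?(sorted_uniq ltn_trans ltnn ss) //.
apply: (sorted_sort leq_trans); apply: sub_sorted ss => a b; exact: ltnW.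
Qed.

Lemma mem_fU A B x : (x \in fs (fU A B)) = (x \in fs A) || (x \in fs B).
Proof. by rewrite mem_fset_of mem_cat. Qed.
Lemma mem_fI A B x : (x \in fs (fI A B)) = (x \in fs A) && (x \in fs B).
Proof. by rewrite mem_fset_of mem_filter andbC. Qed.
Lemma mem_fD A B x : (x \in fs (fD A B)) = (x \in fs A) && (x \notin fs B).
Proof. by rewrite mem_fset_of mem_filter andbC. Qed.
Lemma mem_fempty x : (x \in fs fempty) = false.
Proof. by rewrite mem_fset_of. Qed.
Lemma mem_bigU Cs x : (x \in fs (bigU Cs)) = has (fun B => x \in fs B) Cs.
Proof. by elim: Cs => [|B Cs IH] /=; rewrite ?mem_fempty // mem_fU IH. Qed.

Lemma fsubP A B : reflect (forall x, x \in fs A -> x \in fs B) (fsub A B).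
Proof. exact: allP. Qed.

Lemma fdisjP A B : reflect (forall x, x \in fs A -> x \notin fs B) (fdisj A B).
Proof. exact: allP. Qed.

Lemma fimg_idn A : fimg idn A = A.
Proof. by apply: fnset_ext => x; rewrite mem_fset_of map_id. Qed.

Lemma fbij_idn A : fbij A A idn.
Proof. by split; [move=> x y _ _ | exact: fimg_idn]. Qed.

Section SC.
Variables (I : fnset) (C : seq fnset).
Hypothesis sc : is_setcomp I C.

Lemma sc_mem x : (x \in fs I) = has (fun B => x \in fs B) C.
Proof. by case/and3P: sc => _ _ /eqP <-; rewrite mem_bigU. Qed.

Lemma sc_bi_lt x : x \in fs I -> blockidx C x < size C.
Proof. by rewrite sc_mem /blockidx has_find. Qed.

Lemma sc_nth t x : t < size C ->
  (x \in fs (nth fempty C t)) = (x \in fs I) && (blockidx C x == t).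
Proof.
move=> lt; apply/idP/andP => [xin | [xI /eqP <-]].
  have xI : x \in fs I by rewrite sc_mem; apply/hasP; exists (nth fempty C t) => //; exact: mem_nth.
  split => //; rewrite eqn_leq; apply/andP; split.
    rewrite leqNgt; apply/negP => ltf.
    by move: (before_find fempty ltf); rewrite /= xin.
  rewrite leqNgt; apply/negP => ltf.
  case/and3P: sc => _ /(pairwiseP fempty) pw _.
  have := pw (blockidx C x) t; rewrite !inE => /(_ (ltn_trans ltf lt) lt ltf) /fdisjP.
  have hx : x \in fs (nth fempty C (blockidx C x)).
    by apply: (nth_find fempty (a := fun B => x \in fs B)); rewrite -sc_mem.
  by move=> /(_ x hx); rewrite xin.
by apply: (nth_find fempty (a := fun B => x \in fs B)); rewrite -sc_mem.
Qed.

Lemma sc_ne t : t < size C -> exists x, x \in fs I /\ blockidx C x = t.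
Proof.
move=> lt; case/and3P: sc => /allP ne _ _.
have := ne _ (mem_nth fempty lt); case E: (fs (nth fempty C t)) => [|x s] // _.
exists x; have : x \in fs (nth fempty C t) by rewrite E inE eqxx.
by rewrite sc_nth // => /andP [-> /eqP].
Qed.

Lemma sc_count t : t < size C ->
  count (fun x => blockidx C x == t) (fs I) = size (fs (nth fempty C t)).
Proof.
move=> lt; rewrite -size_filter; apply: perm_size; apply: uniq_perm.
- exact: (filter_uniq _ (fs_uniq I)).
- exact: fs_uniq.
by move=> x; rewrite mem_filter sc_nth // andbC.
Qed.

End SC.

Definition nz (e : seq nat) := [seq k <- iota 0 (size e) | 0 < nth 0 e k].

Lemma filter_nz e : [seq k <- e | 0 < k] = map (nth 0 e) (nz e).
Proof.
rewrite /nz -filter_map; congr filter.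
by rewrite map_nth_iota0 // take_size.
Qed.

Lemma nz_sorted e : sorted ltn (nz e).
Proof. exact: (sorted_filter ltn_trans _ (iota_ltn_sorted _ _)). Qed.

Lemma nz_uniq e : uniq (nz e).
Proof. exact: (sorted_uniq ltn_trans ltnn (nz_sorted e)). Qed.

Lemma mem_nz e k : (k \in nz e) = (k < size e) && (0 < nth 0 e k).
Proof. by rewrite mem_filter mem_iota add0n andbC. Qed.

Lemma card_nth (s : seq nat) (P : pred nat) :
  #|[set i : 'I_(size s) | P (nth 0 s i)]| = count P s.
Proof.
rewrite -sum1_card -sum1_count (big_nth 0) big_mkord.
by apply: eq_bigl => i; rewrite inE.
Qed.

Section Cone.
Variables (I : fnset) (C : seq fnset) (e : seq nat).
Hypothesis sc : is_setcomp I C.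
Local Notation n := (size (fs I)).
Local Notation m := (size e).
Local Notation bi i := (blockidx C (nth 0 (fs I) i)).

Lemma biI (i : 'I_n) : bi i < size C.
Proof. by apply: (sc_bi_lt sc); apply: mem_nth. Qed.

Lemma bi_surj t : t < size C -> exists i : 'I_n, bi i = t.
Proof.
move=> lt; have [x [xI bx]] := sc_ne sc lt.
have xi : index x (fs I) < n by rewrite index_mem.
by exists (Ordinal xi); rewrite /= nth_index.
Qed.

Lemma cone_only_if (a : {ffun 'I_n -> 'I_m}) :
  in_cone C a -> weight_is a ->
  [/\ forall i, val (a i) = nth 0 (nz e) (bi i),
      size (nz e) = size C &
      [seq k <- e | 0 < k] = ctype C].
Proof.
move=> /forallP cone /forallP wt.
have cone1 : forall i j : 'I_n, bi i = bi j -> a i = a j.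
  by move=> i j hij; have /forallP/(_ j)/andP[/implyP h _] := cone i; apply/eqP/h/eqP.
have cone2 : forall i j : 'I_n, bi i < bi j -> val (a i) < val (a j).
  by move=> i j hij; have /forallP/(_ j)/andP[_ /implyP h] := cone i; apply: h.
pose v (t : nat) := if [pick i : 'I_n | bi i == t] is Some i then val (a i) else 0.
have av : forall i : 'I_n, val (a i) = v (bi i).
  move=> i; rewrite /v; case: pickP => [j /eqP hj | none].
    by rewrite (cone1 i j) // hj.
  by move: (none i); rewrite eqxx.
have vlt : forall t, t < size C -> v t < m.
  by move=> t /bi_surj [i <-]; rewrite -av; apply: ltn_ord.
have vinc : forall t t', t < t' -> t' < size C -> v t < v t'.
  move=> t t' ltt lt'; have [i hi] := bi_surj (ltn_trans ltt lt').
  have [j hj] := bi_surj lt'.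
  by rewrite -hi -hj -!av; apply: cone2; rewrite hi hj.
have vinj : forall t t', t < size C -> t' < size C -> (v t == v t') = (t == t').
  move=> t t' lt lt'; case: (ltngtP t t') => h.
  - by apply/negbTE; rewrite neq_ltn vinc ?orbT.
  - by apply/negbTE; rewrite neq_ltn (vinc t' t) ?orbT.
  - by rewrite h eqxx.
pose V := map v (iota 0 (size C)).
have Vs : sorted ltn V.
  apply: (homo_sorted_in (P := gtn (size C))); last exact: iota_ltn_sorted.
    by move=> t t' _ lt' /= ltt; apply: vinc.
  by apply/allP => t; rewrite mem_iota.
have VE : V = nz e.
  apply: (irr_sorted_eq ltn_trans ltnn Vs (nz_sorted e)) => k.
  rewrite mem_nz; apply/mapP/andP => [[t] | [km ek]].
    rewrite mem_iota add0n => /andP [_ lt] ->.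
    split; first exact: vlt.
    have [i hi] := bi_surj lt.
    have := wt (Ordinal (vlt t lt)); rewrite /= => /eqP ->.
    apply/card_gt0P; exists i; rewrite inE; apply/eqP/val_inj => /=.
    by rewrite av hi.
  have := wt (Ordinal km); rewrite /= => /eqP E; rewrite E in ek.
  have [j] := card_gt0P ek; rewrite inE => /eqP ajk.
  exists (bi j); first by rewrite mem_iota add0n biI.
  by rewrite -av ajk.
have szV : size V = size C by rewrite size_map size_iota.
have anz : forall i : 'I_n, val (a i) = nth 0 (nz e) (bi i).
  by move=> i; rewrite -VE (nth_map 0) ?size_iota ?biI // nth_iota ?biI // av.
split => //; first by rewrite -VE.
rewrite filter_nz -VE /ctype -map_comp -[in RHS](mkseq_nth fempty C) /mkseq -map_comp.
apply/eq_in_map => t; rewrite mem_iota add0n /= => lt.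
have := wt (Ordinal (vlt t lt)); rewrite /= => /eqP ->.
rewrite -(sc_count sc lt) -card_nth; apply: eq_card => i; rewrite !inE.
apply/eqP/eqP => [h | h].
  by apply/eqP; rewrite -(vinj _ _ (biI i) lt) -av h.
by apply: val_inj; rewrite /= av h.
Qed.

Lemma cone_exists : [seq k <- e | 0 < k] = ctype C ->
  exists a : {ffun 'I_n -> 'I_m}, in_cone C a && weight_is a.
Proof.
move=> fe.
have szn : size (nz e) = size C.
  by rewrite -(size_map (nth 0 e)) -filter_nz fe size_map.
have lt_pf : forall i : 'I_n, nth 0 (nz e) (bi i) < m.
  move=> i; have : nth 0 (nz e) (bi i) \in nz e by rewrite mem_nth // szn biI.
  by rewrite mem_nz => /andP [].
exists [ffun i => Ordinal (lt_pf i)]; apply/andP; split.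
  apply/forallP => i; apply/forallP => j; rewrite !ffunE /=; apply/andP; split.
    by apply/implyP => /eqP hij; apply/eqP/val_inj; rewrite /= hij.
  apply/implyP => lt; apply: (sorted_ltn_nth ltn_trans 0 (nz_sorted e)) => //;
    by rewrite inE szn biI.
apply/forallP => k; case: (boolP (0 < nth 0 e k)) => ek.
  have kin : val k \in nz e by rewrite mem_nz ltn_ord ek.
  set t := index (val k) (nz e).
  have tlt : t < size C by rewrite -szn index_mem.
  have nt : nth 0 (nz e) t = k by rewrite nth_index.
  apply/eqP; rewrite -[X in nth 0 e X]nt.
  have : nth 0 [seq k <- e | 0 < k] t = nth 0 e (nth 0 (nz e) t).
    by rewrite filter_nz (nth_map 0) // szn.
  rewrite fe /ctype (nth_map fempty) // => <-.
  rewrite -(sc_count sc tlt) -card_nth; apply: eq_card => i; rewrite !inE.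
  apply/eqP/eqP => [h | h].
    by apply: val_inj; rewrite ffunE /= h nt.
  move: (congr1 (@nat_of_ord _) h); rewrite ffunE /= -nt; move/eqP.
  by rewrite nth_uniq ?nz_uniq // ?szn ?biI // => /eqP.
rewrite lt0n negbK in ek; rewrite (eqP ek); apply/eqP/esym.
apply/eqP; rewrite cards_eq0; apply/eqP/setP => i; rewrite !inE.
apply/negP => /eqP h; move: (congr1 (@nat_of_ord _) h); rewrite ffunE /= => hk.
have : nth 0 (nz e) (bi i) \in nz e by rewrite mem_nth // szn biI.
by rewrite hk mem_nz (eqP ek) ltnn andbF.
Qed.

Lemma cone_unique (a a' : {ffun 'I_n -> 'I_m}) :
  in_cone C a -> weight_is a -> in_cone C a' -> weight_is a' -> a = a'.
Proof.
move=> c w c' w'; have [h _ _] := cone_only_if c w; have [h' _ _] := cone_only_if c' w'.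
by apply/ffunP => i; apply: val_inj; rewrite h h'.
Qed.

End Cone.

Lemma cone_det (I : fnset) (C C' : seq fnset) (e : seq nat)
  (a : {ffun 'I_(size (fs I)) -> 'I_(size e)}) :
  is_setcomp I C -> is_setcomp I C' -> in_cone C a -> in_cone C' a -> weight_is a ->
  C = C'.
Proof.
move=> sc sc' c c' w.
have [h sz _] := cone_only_if sc c w; have [h' sz' _] := cone_only_if sc' c' w.
have bE : forall x, x \in fs I -> blockidx C x = blockidx C' x.
  move=> x xI; have xi : index x (fs I) < size (fs I) by rewrite index_mem.
  have := h (Ordinal xi); rewrite h' /= nth_index // => /eqP.
  have l1 : blockidx C x < size (nz e) by rewrite sz (sc_bi_lt sc).
  have l2 : blockidx C' x < size (nz e) by rewrite sz' (sc_bi_lt sc').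
  by rewrite nth_uniq ?nz_uniq // => /eqP.
apply: (@eq_from_nth _ fempty); first by rewrite -sz sz'.
move=> t lt; have lt' : t < size C' by rewrite -sz' sz.
apply: fnset_ext => x; rewrite (sc_nth sc) // (sc_nth sc') //.
by case xI : (x \in fs I) => //=; rewrite bE.
Qed.

Lemma card_cone (I : fnset) (C : seq fnset) (e : seq nat) :
  is_setcomp I C ->
  #|[set a : {ffun 'I_(size (fs I)) -> 'I_(size e)} | weight_is a && in_cone C a]|
  = nat_of_bool ([seq k <- e | 0 < k] == ctype C).
Proof.
move=> sc; case: eqP => fe /=.
  have [a0 /andP [c0 w0]] := cone_exists sc fe.
  rewrite -(cards1 a0); apply: eq_card => a; rewrite !inE.
  apply/andP/eqP => [[w c] | ->]; last by [].
  exact: (cone_unique sc c w c0 w0).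
apply/eqP; rewrite eqn0Ngt; apply/negP => /card_gt0P [a]; rewrite inE => /andP [w c].
by apply: fe; have [_ _ ->] := cone_only_if sc c w.
Qed.

Lemma subseqs_sub (s t : seq nat) : t \in subseqs s -> subseq t s.
Proof.
elim: s t => [|x s IH] t /=; first by rewrite inE => /eqP ->.
rewrite mem_cat => /orP [/mapP [t' /IH st ->] | /IH st].
  by rewrite /= eqxx.
exact: (subseq_trans st (subseq_cons s x)).
Qed.

Lemma subseqs_uniq (s : seq nat) : uniq s -> uniq (subseqs s).
Proof.
elim: s => [|x s IH] //= /andP [xs us].
rewrite cat_uniq (map_inj_uniq (fun a b (h : x :: a = x :: b) => congr1 behead h)) IH //=.
rewrite andbT; apply/hasP => [[t tin /mapP [t' _ ht]]].
move: (subseqs_sub tin); rewrite ht => /mem_subseq /(_ x); rewrite inE eqxx => /(_ isT).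
by rewrite (negbTE xs).
Qed.

Lemma subsets_uniq I : uniq (subsets I).
Proof.
rewrite /subsets map_inj_in_uniq ?subseqs_uniq ?fs_uniq //.
move=> t t' ht ht' e.
have st : sorted ltn t := subseq_sorted ltn_trans (subseqs_sub ht) (fs_sorted I).
have st' : sorted ltn t' := subseq_sorted ltn_trans (subseqs_sub ht') (fs_sorted I).
by rewrite -(fs_fset_of st) -(fs_fset_of st') e.
Qed.

Lemma tuples_size (T : eqType) k (L : seq T) t : t \in tuples_of k L -> size t = k.
Proof.
elim: k t => [|k IH] t /=; first by rewrite inE => /eqP ->.
by case/allpairsP => [[x t'] [_ /IH h ->]] /=; rewrite h.
Qed.

Lemma tuples_uniq (T : eqType) k (L : seq T) : uniq L -> uniq (tuples_of k L).
Proof.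
move=> uL; elim: k => [|k IH] //=.
apply: allpairs_uniq => // [[x t]] [y u] _ _ /= [-> ->] //.
Qed.

Lemma flatten_iota_uniq (T : eqType) (f : nat -> seq (seq T)) a b :
  (forall k, uniq (f k)) -> (forall k t, t \in f k -> size t = k) ->
  uniq (flatten [seq f k | k <- iota a b]).
Proof.
move=> uf sf; elim: b a => [|b IH] a //=.
rewrite cat_uniq uf IH andbT /=; apply/hasP => [[t /flattenP [s /mapP [k]]]].
rewrite mem_iota => /andP [ak _] -> tk ta.
by move: (sf _ _ tk) (sf _ _ ta) ak => -> ->; rewrite ltnn.
Qed.

Lemma setcomps_uniq I : uniq (setcomps I).
Proof.
apply: filter_uniq; apply: flatten_iota_uniq.
  by move=> k; apply: tuples_uniq; apply: subsets_uniq.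
by move=> k t; apply: tuples_size.
Qed.

Lemma setcomps_sc I C : C \in setcomps I -> is_setcomp I C.
Proof. by rewrite mem_filter => /andP []. Qed.

Lemma prod_bool_int n (g : nat -> bool) :
  (\prod_(j < n) Posz (nat_of_bool (g j)))%R = Posz (nat_of_bool (all g (iota 0 n))).
Proof.
case: (boolP (all g (iota 0 n))) => al.
  by rewrite big1 // => j _; move/allP: al => /(_ j); rewrite mem_iota /= ltn_ord => ->.
have [j jin gj] := allPn al; move: jin; rewrite mem_iota add0n => jn.
rewrite (bigD1 (Ordinal jn)) //= (negbTE gj) /=; exact: mul0r.
Qed.

Lemma sum_count (T : Type) (L : seq T) (S c : pred T) :
  \sum_(C <- L | S C) nat_of_bool (c C) = count (fun C => S C && c C) L.
Proof.
elim: L => [|x L IH]; first by rewrite big_nil.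
by rewrite big_cons /= -IH; case: (S x) => //=; rewrite add0n.
Qed.

Lemma count_le1 (T : eqType) (L : seq T) (P : pred T) :
  uniq L -> {in L &, forall x y, P x -> P y -> x = y} -> count P L <= 1.
Proof.
elim: L => [|x L IH] //= /andP [xL uL] hP.
case: (boolP (P x)) => px /=.
  rewrite add1n ltnS leqn0 -(negbK (_ == 0)) -lt0n -has_count; apply/hasP => [[y yL py]].
  have := hP x y; rewrite !inE eqxx yL orbT => /(_ isT isT px py) xy.
  by rewrite xy yL in xL.
rewrite add0n; apply: IH => // a b aL bL; apply: hP; by rewrite inE ?aL ?bL orbT.
Qed.

Lemma card_sum (T : finType) (P : pred T) : #|[set a | P a]| = \sum_a nat_of_bool (P a).
Proof. by rewrite -sum1_card big_mkcond; apply: eq_bigr => a _; rewrite inE. Qed.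

Lemma part2 (H : HopfMonoid) (K : forall I, pred (hcar H I)) (I : fnset) (h : hcar H I)
  (e : seq nat) :
  Psi (phiK K) h e
  = (\sum_(C <- setcomps I | inDelta h C && ~~ inGamma K h C) Mono (ctype C) e)%R.
Proof.
rewrite /Psi [in RHS]big_mkcond /=; apply: eq_big_seq => C Cin.
have sc := setcomps_sc Cin.
pose g j := if minor h C j is Some x then K _ x else false.
have -> : (\prod_(j < size C) phiK K (minor h C j))%R
          = Posz (nat_of_bool (all g (iota 0 (size C)))).
  rewrite -prod_bool_int; apply: eq_bigr => j _; rewrite /g; case: (minor h C j) => [x|]; reflexivity.
have -> : inDelta h C && ~~ inGamma K h C = all g (iota 0 (size C)).
  rewrite /inGamma /inDelta sc /=.
  have -> : all g (iota 0 (size C))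
     = all (predI (fun j => isSome (minor h C j)) (predC (fun j => notinK K (minor h C j))))
           (iota 0 (size C)).
    by apply: eq_all => j; rewrite /g /=; case: (minor h C j) => [x|] //=; rewrite negbK.
  by rewrite all_predI all_predC; case: (all _ _).
by case: (all g _); rewrite /= ?mul1r ?mul0r.
Qed.

Lemma part3 (H : HopfMonoid) (K : forall I, pred (hcar H I)) (I : fnset) (h : hcar H I)
  (e : seq nat) :
  Psi (phiK K) h e = Ehrhart (fun C => inDelta h C && ~~ inGamma K h C) I e.
Proof.
rewrite part2 /Ehrhart /Mono.
set S := fun C => inDelta h C && ~~ inGamma K h C.
rewrite -(big_morph Posz PoszD (erefl (Posz 0))); congr Posz.
rewrite /S; transitivity (\sum_(C <- setcomps I | S C)
   #|[set a : {ffun 'I_(size (fs I)) -> 'I_(size e)} | weight_is a && in_cone C a]|).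
  rewrite big_seq_cond [in RHS]big_seq_cond; apply: eq_bigr => C /andP [Cin _]; rewrite card_cone //; exact: setcomps_sc.
under eq_bigr => C _ do rewrite card_sum.
rewrite exchange_big card_sum; apply: eq_bigr => a _.
case: (boolP (weight_is a)) => w /=; last by rewrite big1.
rewrite sum_count has_count.
have : count (fun C => S C && in_cone C a) (setcomps I) <= 1.
  apply: count_le1; first exact: setcomps_uniq.
  move=> C C' Cin C'in /andP [_ c] /andP [_ c'].
  exact: (cone_det (setcomps_sc Cin) (setcomps_sc C'in) c c' w).
by case: (count _ _) => [|[]].
Qed.

Lemma has_flatten (T : Type) (p : pred T) (ss : seq (seq T)) :
  has p (flatten ss) = has (has p) ss.
Proof. by elim: ss => [|s ss IH] //=; rewrite has_cat IH. Qed.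

Lemma flatten_take_reshape (T : Type) (r : seq nat) (C : seq T) j :
  flatten (take j (reshape r C)) = take (sumn (take j r)) C.
Proof.
elim: r C j => [|n r IH] C j; first by case: j => [|j] /=; rewrite take0.
case: j => [|j] /=; first by rewrite take0.
by rewrite IH takeD.
Qed.

Lemma mem_pref C k x : (x \in fs (pref C k)) = has (fun B => x \in fs B) (take k C).
Proof. exact: mem_bigU. Qed.

Lemma pref_sub C k k' : k <= k' -> fsub (pref C k) (pref C k').
Proof.
move=> le; apply/fsubP => x; rewrite !mem_pref -(subnKC le) takeD has_cat => ->.
by [].
Qed.

Lemma pref_subI I C k : is_setcomp I C -> fsub (pref C k) I.
Proof.
move=> sc; apply/fsubP => x; rewrite mem_pref (sc_mem sc) => /hasP [B Bin xB].
by apply/hasP; exists B => //; exact: (mem_take Bin).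
Qed.

Lemma pref_coarse (C : seq fnset) r j x :
  (x \in fs (pref (map Defs.bigU (reshape r C)) j)) = (x \in fs (pref C (sumn (take j r)))).
Proof.
rewrite !mem_pref -map_take has_map -flatten_take_reshape has_flatten.
by apply: eq_has => l /=; rewrite mem_bigU.
Qed.

Lemma find_block (r : seq nat) i : i < sumn r ->
  exists j, [/\ j < size r, sumn (take j r) <= i & i < sumn (take j.+1 r)].
Proof.
elim: r i => [|n r IH] i //= lt.
case: (ltnP i n) => hi.
  by exists 0; split => //=; rewrite take0 /= addn0.
have [j [jr lo up]] : exists j, [/\ j < size r, sumn (take j r) <= i - n & i - n < sumn (take j.+1 r)].
  by apply: IH; rewrite ltn_subLR.
exists j.+1; split => //=.
  by rewrite -(leq_add2l n) subnKC in lo.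
by rewrite -(ltn_add2l n) subnKC in up.
Qed.

Lemma fsubD A B X : fsub A B -> fsub (fD A X) (fD B X).
Proof.
move/fsubP => s; apply/fsubP => x; rewrite !mem_fD => /andP [xa ->].
by rewrite s.
Qed.

Lemma relK_back (H : HopfMonoid) (K : forall I, pred (hcar H I)) A B (c : hcar H A) :
  A = B -> K B (hrel A B idn c) -> K A c.
Proof. by case: B /; rewrite hrel_id. Qed.

Lemma part1 (H : HopfMonoid) (K : forall I, pred (hcar H I)) (I : fnset) (h : hcar H I)
  (C D : seq fnset) :
  is_submonoid K -> inGamma K h C -> inDelta h D -> coarsening D C -> inGamma K h D.
Proof.
case=> _ _ _ Kres Kcon.
move=> /andP [/andP [scC _] /hasP [i iin nC]] hD [r [rpos sr DE]].
have hD' := hD; case/andP: hD' => scD defD.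
rewrite /inGamma hD /=.
move: iin; rewrite mem_iota add0n => ilt.
rewrite -sr in ilt; have [j [jr lo up]] := find_block ilt.
have szD : size D = size r by rewrite DE size_map size_reshape.
apply/hasP; exists j; first by rewrite mem_iota add0n szD.
have : isSome (minor h D j) by move/allP: defD; apply; rewrite mem_iota add0n szD.
case Em : (minor h D j) => [m|] // _ /=; apply/negP => Km.
move: nC; case Ec0 : (minor h C i) => [c|] //= nKc.
set P := pref D j; set Q := pref D j.+1; set Si := pref C i; set Si1 := pref C i.+1.
have ePS : fsub P Si.
  apply/fsubP => x; rewrite /P DE pref_coarse => xin.
  by move/fsubP: (pref_sub C lo); apply.
have eSQ : fsub Si1 Q.
  apply/fsubP => x xin; rewrite /Q DE pref_coarse.
  by move/fsubP: (pref_sub C up); apply.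
have eQI : fsub Q I by apply: pref_subI.
have eSS : fsub Si Si1 by apply: pref_sub.
have ePS1 : fsub P Si1.
  by apply/fsubP => x /(fsubP _ _ ePS) /(fsubP _ _ eSS).
move: Em; rewrite /minor -/P -/Q; case Ex : (hres I Q h) => [x|] //= Em.
move: Ec0; rewrite /minor -/Si -/Si1; case Ey : (hres I Si1 h) => [y|] //= Ec.
have r1 := hres_res H I Q Si1 h eSQ eQI; rewrite Ex Ey /= in r1.
have r2 := hres_con H Q Si1 P x ePS1 eSQ; rewrite r1 Em /= in r2.
have r3 := hcon_con H Si1 Si P y ePS eSS; rewrite Ec /= in r3.
move: r2 r3; case Ez : (hcon P y) => [z|] //= r2 r3.
have Kz : K (fD Si1 P) z.
  apply: (Kres (fD Q P) (fD Si1 P) m z) => //; first exact: fsubD.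
have Kw := Kcon _ _ _ _ (fsubD P eSS) Kz r3.
move: nKc; rewrite (relK_back (A := fD Si1 Si) (B := fD (fD Si1 P) (fD Si P)) _ Kw) //.
apply: fnset_ext => u; rewrite !mem_fD.
case uS1 : (u \in fs Si1) => //=; case uS : (u \in fs Si) => //=.
  by case: (u \in fs P).
case uP : (u \in fs P) => //=.
by move/fsubP: ePS => /(_ u uP); rewrite uS.
Qed.

Theorem mainTheorem3 (H : HopfMonoid) (K : forall I, pred (hcar H I))
  (I : fnset) (h : hcar H I) :
  is_submonoid K ->
  (forall C D : seq fnset,
      inGamma K h C -> inDelta h D -> coarsening D C -> inGamma K h D) /\
  (forall e : seq nat,
      Psi (phiK K) h e
      = (\sum_(C <- setcomps I | inDelta h C && ~~ inGamma K h C) Mono (ctype C) e)%R) /\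
  (forall e : seq nat,
      Psi (phiK K) h e
      = Ehrhart (fun C => inDelta h C && ~~ inGamma K h C) I e).
Proof.
move=> sub; split; first by move=> C D; apply: part1.
split => e; [exact: part2 | exact: part3].
Qed.
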